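(* Let $d\ge2$ be fixed, $c_0$ a constant (e.g. $c_0=100d$), and $c,c_1>0$ fixed constants. Define $R^2=2\log n+\log((\log n)^{c_0})$, $\rho^2=2\log n-\log\log n+\log\big((c\log\log n)^{-2}\big)$, and $r=\rho-5c_1^2/\rho$. Let $y_1,\dots,y_m$ be a system of points on the sphere $S(\rho)$ of radius $\rho$ about the origin that is maximal with respect to the property $|y_i-y_j|\ge2c_1$ for $i\ne j$. Let $V_i=\{x:\ |x-y_i|\le|x-y_j|\text{ for all }j\}$ be the Voronoi region of $y_i$, let $A(R,r)=B(R)\setminus B(r)$, and let $W_i=V_i\cap A(R,r)$. Define the graph $G$ on vertex set $\{1,\dots,m\}$ in which $i\neq j$ are adjacent if and only if there exist $a_i\in W_i$, $a_j\in W_j$ and $b\in A(R,r)$ such that the segments $[a_i,b]$ and $[b,a_j]$ lie entirely in $A(R,r)$. Then the maximal degree $D$ of $G$ satisfies $D=O\big((\log\log n)^{\frac{d-1}{2}}\big)$ as $n\to\infty$.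
   Context: $B(x)$ denotes the closed ball of radius $x$ centered at the origin. $f(n)=O(g(n))$ means $f(n)\le Cg(n)$ for a constant $C$ independent of $n$ and all large $n$. *)

(* Defs.v *)
From HB Require Import structures.
From mathcomp Require Import all_boot all_order all_algebra.
From mathcomp Require Import all_classical all_reals all_analysis.
Set Implicit Arguments. Unset Strict Implicit. Unset Printing Implicit Defensive.
Import Order.TTheory GRing.Theory Num.Theory.
Local Open Scope ring_scope.

Definition enorm (R : realType) (d : nat) (x : 'rV[R]_d) : R :=
  Num.sqrt (\sum_(k < d) x ord0 k ^+ 2).

Definition in_annulus (R : realType) (d : nat) (Ro ri : R) (x : 'rV[R]_d) : Prop :=
  enorm x <= Ro /\ ~ (enorm x <= ri).

Definition seg_in_annulus (R : realType) (d : nat) (Ro ri : R) (a b : 'rV[R]_d) : Prop :=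
  forall t : R, 0 <= t <= 1 -> in_annulus Ro ri ((1 - t) *: a + t *: b).

(* y_1..y_m on the sphere S(rho), pairwise distance >= 2 c1, maximal
   with this property (no further point of S(rho) can be added). *)
Definition maximal_separated_system (R : realType) (d : nat) (rho c1 : R)
    (m : nat) (y : 'I_m -> 'rV[R]_d) : Prop :=
  (forall i, enorm (y i) = rho) /\
  (forall i j, i != j -> 2 * c1 <= enorm (y i - y j)) /\
  (forall z : 'rV[R]_d, enorm z = rho -> exists i, enorm (z - y i) < 2 * c1).

Definition voronoi (R : realType) (d : nat) (m : nat) (y : 'I_m -> 'rV[R]_d)
    (i : 'I_m) (x : 'rV[R]_d) : Prop :=
  forall j, enorm (x - y i) <= enorm (x - y j).

Definition Wreg (R : realType) (d : nat) (Ro ri : R) (m : nat) (y : 'I_m -> 'rV[R]_d)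
    (i : 'I_m) (x : 'rV[R]_d) : Prop :=
  voronoi y i x /\ in_annulus Ro ri x.

Definition adjacent (R : realType) (d : nat) (Ro ri : R) (m : nat) (y : 'I_m -> 'rV[R]_d)
    (i j : 'I_m) : Prop :=
  i != j /\ exists (ai aj b : 'rV[R]_d),
    [/\ Wreg Ro ri y i ai, Wreg Ro ri y j aj, in_annulus Ro ri b,
        seg_in_annulus Ro ri ai b & seg_in_annulus Ro ri b aj].

Definition degree (R : realType) (d : nat) (Ro ri : R) (m : nat) (y : 'I_m -> 'rV[R]_d)
    (i : 'I_m) : nat :=
  #|[set j : 'I_m | `[< adjacent Ro ri y i j >]]|.

Definition Rad (R : realType) (c0 : R) (n : nat) : R :=
  Num.sqrt (2 * ln (n%:R) + ln ((ln (n%:R)) `^ c0)).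

Definition rho (R : realType) (c : R) (n : nat) : R :=
  Num.sqrt (2 * ln (n%:R) - ln (ln (n%:R)) + ln ((c * ln (ln (n%:R))) ^- 2)).

Definition rin (R : realType) (c c1 : R) (n : nat) : R :=
  rho c n - 5 * c1 ^+ 2 / rho c n.

(* Main.v *)
Require Import Defs.
From HB Require Import structures.
From mathcomp Require Import all_boot all_order all_algebra.
From mathcomp Require Import all_classical all_reals all_analysis.
From mathcomp Require Import ring lra.
Import Order.TTheory GRing.Theory Num.Theory.
Local Open Scope ring_scope.



Definition ns {R : realType} {d : nat} (x : 'rV[R]_d) : R :=
  \sum_(k < d) x ord0 k ^+ 2.

Lemma ns_ge0 {R : realType} {d : nat} (x : 'rV[R]_d) : 0 <= ns x.
Proof. by apply: sumr_ge0 => k _; rewrite sqr_ge0. Qed.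

Lemma enorm_sq {R : realType} {d : nat} (x : 'rV[R]_d) : enorm x ^+ 2 = ns x.
Proof. by rewrite /enorm sqr_sqrtr // ns_ge0. Qed.

Lemma enorm_ge0 {R : realType} {d : nat} (x : 'rV[R]_d) : 0 <= enorm x.
Proof. exact: sqrtr_ge0. Qed.

Lemma ns_le {R : realType} {d : nat} {x : 'rV[R]_d} {e : R} :
  enorm x <= e -> ns x <= e ^+ 2.
Proof.
move=> h; rewrite -enorm_sq; have := enorm_ge0 x; nra.
Qed.

Lemma ns_lt {R : realType} {d : nat} {x : 'rV[R]_d} {e : R} :
  enorm x < e -> ns x < e ^+ 2.
Proof.
move=> h; rewrite -enorm_sq; have := enorm_ge0 x; nra.
Qed.

Lemma ns_ge {R : realType} {d : nat} {x : 'rV[R]_d} {e : R} :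
  0 <= e -> e <= enorm x -> e ^+ 2 <= ns x.
Proof.
move=> h0 h; rewrite -enorm_sq; nra.
Qed.

Lemma ns_gt {R : realType} {d : nat} {x : 'rV[R]_d} {e : R} :
  0 <= e -> e < enorm x -> e ^+ 2 < ns x.
Proof.
move=> h0 h; rewrite -enorm_sq; nra.
Qed.

Lemma ns_mono {R : realType} {d : nat} {x y : 'rV[R]_d} :
  enorm x <= enorm y -> ns x <= ns y.
Proof.
move=> h; rewrite -!enorm_sq; have := enorm_ge0 x; nra.
Qed.

Lemma ns_coord {R : realType} {d : nat} (x : 'rV[R]_d) m :
  x ord0 m ^+ 2 <= ns x.
Proof.
rewrite /ns (bigD1 m) //= lerDl; apply: sumr_ge0 => k _; exact: sqr_ge0.
Qed.

Lemma ns_split {R : realType} {d : nat} (x : 'rV[R]_d) m :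
  ns x = x ord0 m ^+ 2 + \sum_(k < d | k != m) x ord0 k ^+ 2.
Proof. by rewrite /ns (bigD1 m). Qed.

Lemma ns_add2 {R : realType} {d : nat} (u v : 'rV[R]_d) :
  ns (u + v) <= 2 * (ns u + ns v).
Proof.
rewrite /ns -big_split /= mulr_sumr; apply: ler_sum => k _; rewrite !mxE.
have := sqr_ge0 (u ord0 k - v ord0 k); nra.
Qed.

Lemma ns_add4 {R : realType} {d : nat} (u v w z : 'rV[R]_d) :
  ns (u + v + w + z) <= 4 * (ns u + ns v + ns w + ns z).
Proof.
rewrite /ns -!big_split /= mulr_sumr; apply: ler_sum => k _; rewrite !mxE.
set a := u ord0 k; set b := v ord0 k; set c := w ord0 k; set e := z ord0 k.
have := sqr_ge0 (a - b); have := sqr_ge0 (a - c); have := sqr_ge0 (a - e);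
have := sqr_ge0 (b - c); have := sqr_ge0 (b - e); have := sqr_ge0 (c - e); nra.
Qed.

Lemma ns_scale {R : realType} {d : nat} (t : R) (x : 'rV[R]_d) :
  ns (t *: x) = t ^+ 2 * ns x.
Proof.
rewrite /ns mulr_sumr; apply: eq_bigr => k _; rewrite !mxE; ring.
Qed.

Lemma ns_opp {R : realType} {d : nat} (x y : 'rV[R]_d) :
  ns (x - y) = ns (y - x).
Proof.
rewrite /ns; apply: eq_bigr => k _; rewrite !mxE; ring.
Qed.

Lemma ns_mid {R : realType} {d : nat} (a b : 'rV[R]_d) :
  ns a + ns b = 2 * ns ((1 - 2^-1) *: a + 2^-1 *: b) + ns (a - b) / 2.
Proof.
rewrite /ns -big_split /= mulr_sumr mulr_suml -big_split /=.
apply: eq_bigr => k _; rewrite !mxE; by field.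
Qed.



Lemma seg_bound {R : realType} {d : nat} {Ro ri : R} {a b : 'rV[R]_d} :
  0 <= ri -> enorm a <= Ro -> enorm b <= Ro -> seg_in_annulus Ro ri a b ->
  ns (a - b) <= 4 * (Ro ^+ 2 - ri ^+ 2).
Proof.
move=> hri ha hb hs.
have [_ hm] := hs 2^-1 (ltac:(apply/andP; split; lra)).
have hm' : ri < enorm ((1 - 2^-1) *: a + 2^-1 *: b) by rewrite ltNge; apply/negP.
have h1 := ns_gt hri hm'.
have h2 := ns_le ha. have h3 := ns_le hb.
have := ns_mid a b. have := ns_ge0 (a - b). nra.
Qed.

Lemma wreg_bound {R : realType} {d : nat} {Ro ri rh c1 : R} {m} {y : 'I_m -> 'rV[R]_d} {i a} :
  0 < ri -> ri <= rh -> rh <= Ro -> maximal_separated_system rh c1 y ->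
  Wreg Ro ri y i a -> ns (a - y i) <= 2 * (Ro ^+ 2 - ri ^+ 2) + 8 * c1 ^+ 2.
Proof.
move=> hri hrh hRo [hy [hsep hmax]] [hv [hRa hra]].
set na := enorm a.
have hna : ri < na by rewrite ltNge; apply/negP.
have na0 : na != 0 by rewrite gt_eqF //; lra.
set z := (rh / na) *: a.
have hz : enorm z = rh.
  rewrite /enorm -/(ns z) ns_scale -enorm_sq -/na.
  have -> : (rh / na) ^+ 2 * na ^+ 2 = rh ^+ 2 by field.
  rewrite sqrtr_sqr ger0_norm //; lra.
have [j hj] := hmax z hz.
have h1 := ns_lt hj.
have hvj := ns_mono (hv j).
have e : a - y j = (a - z) + (z - y j) by rewrite addrA subrK.
have h2 := ns_add2 (a - z) (z - y j). rewrite -e in h2.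
have e2 : ns (a - z) = (na - rh) ^+ 2.
  rewrite /z -{1}(scale1r a) -scalerBl ns_scale -enorm_sq -/na; field; exact: na0.
have h3 : (na - rh) ^+ 2 <= Ro ^+ 2 - ri ^+ 2.
  have hRa' : na <= Ro := hRa.
  have u1 : na - rh <= Ro - ri by lra.
  have u2 : rh - na <= Ro - ri by lra.
  have u3 : (na - rh) ^+ 2 <= (Ro - ri) ^+ 2 by nra.
  nra.
nra.
Qed.

Lemma adj_bound {R : realType} {d : nat} (Ro ri rh c1 : R) m (y : 'I_m -> 'rV[R]_d) i j :
  0 < ri -> ri <= rh -> rh <= Ro -> maximal_separated_system rh c1 y ->
  Defs.adjacent Ro ri y i j ->
  ns (y j - y i) <= 48 * (Ro ^+ 2 - ri ^+ 2) + 64 * c1 ^+ 2.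
Proof.
move=> hri hrh hRo hM [_ [ai [aj [b [hi hj hb s1 s2]]]]].
have e : y j - y i = (y j - aj) + (aj - b) + (b - ai) + (ai - y i).
  by apply/rowP => k; rewrite !mxE; ring.
rewrite e; apply: le_trans (ns_add4 _ _ _ _) _.
have h1 := wreg_bound hri hrh hRo hM hi.
have h2 := wreg_bound hri hrh hRo hM hj.
have h3 := seg_bound (ltW hri) hi.2.1 hb.1 s1.
have h4 := seg_bound (ltW hri) hb.1 hj.2.1 s2.
have o1 := ns_opp (y j) aj. have o2 := ns_opp aj b. have o3 := ns_opp b ai.
lra.
Qed.



Lemma sum_neq_le {R : realType} {d : nat} (k : 'I_d) (F : 'I_d -> R) (c : R) :
  (forall m, m != k -> F m <= c) -> 0 <= c ->
  \sum_(m < d | m != k) F m <= d%:R * c.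
Proof.
move=> hF hc.
apply: le_trans (ler_sum _ hF) _.
have e : \sum_(m < d) c = c + \sum_(m < d | m != k) c by rewrite (bigD1 k).
have e2 : \sum_(m < d) c = d%:R * c by rewrite sumr_const card_ord mulr_natl.
lra.
Qed.

Lemma sum_neq_ge {R : realType} {d : nat} (k : 'I_d) (F : 'I_d -> R) (c : R) :
  (forall m, m != k -> - c <= F m) -> 0 <= c ->
  - (d%:R * c) <= \sum_(m < d | m != k) F m.
Proof.
move=> hF hc.
have := @sum_neq_le R d k (fun m => - F m) c (fun m hm => ltac:(have := hF m hm; lra)) hc.
rewrite sumrN; lra.
Qed.



Lemma sq_le_abs {R : realType} (x L : R) : 0 <= L -> x ^+ 2 <= L ^+ 2 -> - L <= x <= L.
Proof. move=> h0 h; apply/andP; split; nra. Qed.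

Lemma abs_le_sq {R : realType} (x B : R) : - B <= x -> x <= B -> x ^+ 2 <= B ^+ 2.
Proof. move=> h1 h2; nra. Qed.

Lemma count_bound {R : realType} {d : nat} (Ro ri rh c1 Lb2 : R) m (y : 'I_m -> 'rV[R]_d) i :
  (1 <= d)%N -> 0 < c1 -> 0 < ri -> ri <= rh -> rh <= Ro ->
  48 * (Ro ^+ 2 - ri ^+ 2) + 64 * c1 ^+ 2 <= Lb2 ->
  4 * d%:R * Lb2 <= rh ^+ 2 ->
  maximal_separated_system rh c1 y ->
  (degree Ro ri y i <= (Num.trunc (2 * Num.sqrt Lb2 / (c1 / (2 * d%:R ^+ 2)))).+1 ^ d.-1)%N.
Proof.
move=> hd hc1 hri hrh hRo hL2 hL2rh hM.
have hM' := hM; case: hM' => [hy [hsep hmax]].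
set dr : R := d%:R.
have hdr : 1 <= dr by rewrite /dr ler1n.
set s := c1 / (2 * dr ^+ 2).
have hs : 0 < s by rewrite /s divr_gt0 // mulr_gt0 // exprn_gt0 //; lra.
have hLb2 : 0 <= Lb2 by nra.
set Lb := Num.sqrt Lb2.
have hLb : 0 <= Lb by exact: sqrtr_ge0.
have hLbsq : Lb ^+ 2 = Lb2 by rewrite sqr_sqrtr.
set T := Num.trunc (2 * Lb / s).
have hrh0 : 0 < rh by lra.
have hy2 : forall j, ns (y j) = rh ^+ 2 by move=> j; rewrite -enorm_sq hy.
have hS : forall j, Defs.adjacent Ro ri y i j -> ns (y j - y i) <= Lb2.
  move=> j hj; apply: le_trans (@adj_bound _ _ Ro ri rh c1 m y i j hri hrh hRo hM hj) hL2.
have [k hk | hno] := pickP (fun k => rh ^+ 2 <= dr * y i ord0 k ^+ 2); last first.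
  exfalso.
  have hlt : \sum_(k < d) (dr * y i ord0 k ^+ 2) < \sum_(k < d) rh ^+ 2.
    apply: ltr_sum.
      by apply/hasP; exists (Ordinal hd); rewrite ?mem_index_enum.
    by move=> k _; have := hno k; rewrite /= => /negbT; rewrite -ltNge.
  move: hlt; rewrite -mulr_sumr -/(ns (y i)) hy2 sumr_const card_ord mulr_natl -/dr.
  lra.
move: hk => /= hk.
set al := y i ord0 k.
have hal2 : 0 < al ^+ 2.
  have : 0 < dr * al ^+ 2 by apply: lt_le_trans hk; exact: exprn_gt0.
  by rewrite pmulr_rgt0 //; lra.
have h4L : 4 * Lb2 <= al ^+ 2.
  have h0 : 0 <= dr * (al ^+ 2 - 4 * Lb2).
    have hL2rh' : 4 * dr * Lb2 <= rh ^+ 2 := hL2rh.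
    have hk' : rh ^+ 2 <= dr * al ^+ 2 := hk.
    rewrite mulrBr; lra.
  move: h0; rewrite pmulr_rge0; [lra|lra].
have hsign : forall j, Defs.adjacent Ro ri y i j -> 3 / 8 * al ^+ 2 <= al * y j ord0 k.
  move=> j hj.
  have h1 := le_trans (ns_coord (y j - y i) k) (hS j hj).
  move: h1; rewrite !mxE -/al => h1.
  have := sqr_ge0 (y j ord0 k). nra.
have hcoord : forall j m, Defs.adjacent Ro ri y i j ->
    - Lb <= y j ord0 m - y i ord0 m <= Lb.
  move=> j m0 hj; apply: sq_le_abs => //.
  have h1 := le_trans (ns_coord (y j - y i) m0) (hS j hj).
  by move: h1; rewrite !mxE hLbsq.
set v := fun j m0 => (y j ord0 m0 - y i ord0 m0 + Lb) / s.
have hv : forall j m0, Defs.adjacent Ro ri y i j -> 0 <= v j m0 <= 2 * Lb / s.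
  move=> j m0 hj; have /andP[c1' c2'] := hcoord j m0 hj.
  apply/andP; split.
    by rewrite /v divr_ge0 //; [lra | lra].
  by rewrite /v ler_pM2r ?invr_gt0 //; lra.
have hT : forall j m0, Defs.adjacent Ro ri y i j -> (Num.trunc (v j m0) < T.+1)%N.
  move=> j m0 hj; rewrite ltnS /T; apply: le_truncn.
  by have /andP[] := hv j m0 hj.
set f := fun j => [ffun m' : 'I_d.-1 => (inord (Num.trunc (v j (lift k m'))) : 'I_T.+1)].
set S := [set j | `[< Defs.adjacent Ro ri y i j >]].
have finj : {in S &, injective f}.
  move=> j j'; rewrite !inE => hj hj' hf.
  move/ffunP: hf => hf.
  case: (eqVneq j j') => // hne; exfalso.
  have hsep' := ns_ge (ltac:(lra) : 0 <= 2 * c1) (hsep j j' hne).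
  have hclose : forall m0, m0 != k -> - s <= y j ord0 m0 - y j' ord0 m0 <= s.
    move=> m0 hm0.
    case: (unliftP k m0) => [m' em|em]; last by rewrite em eqxx in hm0.
    have := hf m'; rewrite /f !ffunE => /(congr1 val).
    rewrite /= (inordK (hT j (lift k m') hj)) (inordK (hT j' (lift k m') hj')) -em.
    move=> et.
    have /andP[] := hv j m0 hj. move=> hv0 _.
    have /andP[] := hv j' m0 hj'. move=> hv0' _.
    have /andP[t1 t2] := truncn_itv hv0.
    have /andP[t3 t4] := truncn_itv hv0'.
    rewrite et in t1 t2.
    have ed : y j ord0 m0 - y j' ord0 m0 = s * (v j m0 - v j' m0).
      by rewrite /v; field; rewrite gt_eqF.
    rewrite ed; apply/andP; split; nra.
  have hcj : forall jj m0, - rh <= y jj ord0 m0 <= rh.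
    move=> jj m0; apply: sq_le_abs; first lra.
    by rewrite -(hy2 jj); exact: ns_coord.
  set D := y j ord0 k - y j' ord0 k.
  set Sg := y j ord0 k + y j' ord0 k.
  have eDS : D * Sg = \sum_(m0 < d | m0 != k)
      (y j' ord0 m0 - y j ord0 m0) * (y j' ord0 m0 + y j ord0 m0).
    have e1 := ns_split (y j) k; have e2 := ns_split (y j') k.
    have e3 := hy2 j; have e4 := hy2 j'.
    have -> : \sum_(m0 < d | m0 != k)
      (y j' ord0 m0 - y j ord0 m0) * (y j' ord0 m0 + y j ord0 m0) =
      \sum_(m0 < d | m0 != k) y j' ord0 m0 ^+ 2 - \sum_(m0 < d | m0 != k) y j ord0 m0 ^+ 2.
      by rewrite -sumrB; apply: eq_bigr => m0 _; ring.
    have -> : D * Sg = y j ord0 k ^+ 2 - y j' ord0 k ^+ 2 by rewrite /D /Sg; ring.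
    lra.
  have hB : 0 <= dr * (s * (2 * rh)) by apply: mulr_ge0; [lra | nra].
  have hb1 : D * Sg <= dr * (s * (2 * rh)).
    rewrite eDS; apply: sum_neq_le; last by nra.
    move=> m0 hm0; have /andP[u1 u2] := hclose m0 hm0.
    have /andP[w1 w2] := hcj j m0; have /andP[w3 w4] := hcj j' m0.
    nra.
  have hb2 : - (dr * (s * (2 * rh))) <= D * Sg.
    rewrite eDS; apply: sum_neq_ge; last by nra.
    move=> m0 hm0; have /andP[u1 u2] := hclose m0 hm0.
    have /andP[w1 w2] := hcj j m0; have /andP[w3 w4] := hcj j' m0.
    nra.
  set B := dr * (s * (2 * rh)).
  have hDS2 : (D * Sg) ^+ 2 <= B ^+ 2 by apply: abs_le_sq.
  have hs1 := hsign j hj; have hs2 := hsign j' hj'.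
  have hSa : 3 / 4 * al ^+ 2 <= al * Sg by rewrite /Sg; lra.
  have hSa2 : 9 / 16 * al ^+ 2 <= Sg ^+ 2.
    have h0 : 9 / 16 * (al ^+ 2 * al ^+ 2) <= al ^+ 2 * Sg ^+ 2 by nra.
    have h1 : 0 <= al ^+ 2 * (Sg ^+ 2 - 9 / 16 * al ^+ 2) by nra.
    move: h1; rewrite pmulr_rge0 //; lra.
  have hk' : rh ^+ 2 <= dr * al ^+ 2 := hk.
  have hB2 : B ^+ 2 <= 4 * dr ^+ 3 * s ^+ 2 * al ^+ 2.
    have -> : B ^+ 2 = 4 * dr ^+ 2 * s ^+ 2 * rh ^+ 2 by rewrite /B; ring.
    have h0 : 0 <= 4 * dr ^+ 2 * s ^+ 2 by nra.
    have := ler_wpM2l h0 hk'. 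
    have -> : 4 * dr ^+ 2 * s ^+ 2 * (dr * al ^+ 2) = 4 * dr ^+ 3 * s ^+ 2 * al ^+ 2 by ring.
    done.
  have hD2 : D ^+ 2 <= 64 / 9 * dr ^+ 3 * s ^+ 2.
    have h0 : D ^+ 2 * (9 / 16 * al ^+ 2) <= 4 * dr ^+ 3 * s ^+ 2 * al ^+ 2.
      have h1 : D ^+ 2 * (9 / 16 * al ^+ 2) <= D ^+ 2 * Sg ^+ 2.
        by apply: ler_wpM2l; [exact: sqr_ge0 | exact: hSa2].
      have h2 : D ^+ 2 * Sg ^+ 2 = (D * Sg) ^+ 2 by ring.
      lra.
    have h1 : 0 <= al ^+ 2 * (64 / 9 * dr ^+ 3 * s ^+ 2 - D ^+ 2) by nra.
    move: h1; rewrite pmulr_rge0 //; lra.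
  have hrest : \sum_(m0 < d | m0 != k) (y j - y j') ord0 m0 ^+ 2 <= dr * s ^+ 2.
    apply: sum_neq_le; last by nra.
    move=> m0 hm0; rewrite !mxE; have /andP[u1 u2] := hclose m0 hm0; nra.
  have hsplit := ns_split (y j - y j') k.
  rewrite [in X in _ = X]mxE [in X in _ = X]mxE -/D in hsplit.
  have es : s ^+ 2 * dr ^+ 3 * (4 * dr) = c1 ^+ 2.
    rewrite /s; field; rewrite -/dr; lra.
  have hs3 : 4 * (s ^+ 2 * dr ^+ 3) <= c1 ^+ 2.
    have h0 : 0 <= s ^+ 2 * dr ^+ 3 by nra.
    nra.
  have hs4 : dr * s ^+ 2 <= s ^+ 2 * dr ^+ 3.
    have h0 : 0 <= s ^+ 2 by nra.
    have h1 : dr <= dr ^+ 3 by nra.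
    nra.
  have hc12 : 0 < c1 ^+ 2 by nra.
  lra.
rewrite /degree -/S -(card_in_imset finj).
apply: leq_trans (max_card _) _.
by rewrite card_ffun !card_ord.
Qed.



Lemma final_bound {R : realType} (deg d : nat) (K2 s la : R) :
  (1 <= d)%N -> 0 < s -> 1 <= la -> 0 <= K2 ->
  (deg <= (Num.trunc (2 * Num.sqrt (K2 * la) / s)).+1 ^ d.-1)%N ->
  deg%:R <= (2 * Num.sqrt K2 / s + 1) ^+ d.-1 * la `^ ((d%:R - 1) / 2).
Proof.
move=> hd1 hs hla hK2 hdeg.
set A := 2 * Num.sqrt K2 / s + 1.
set X := 2 * Num.sqrt (K2 * la) / s.
have hX0 : 0 <= X.
  apply: divr_ge0; last lra.
  apply: mulr_ge0; [lra | exact: sqrtr_ge0].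
have h1 : deg%:R <= ((Num.trunc X).+1)%:R ^+ d.-1 :> R.
  by rewrite -natrX ler_nat.
have h2 : ((Num.trunc X).+1)%:R <= X + 1 :> R.
  rewrite -natr1; have := truncn_le X; rewrite hX0 => h; lra.
have hsla : 1 <= Num.sqrt la by rewrite -sqrtr1 ler_sqrt //; lra.
have h0 : 0 <= 2 * Num.sqrt K2 / s.
  apply: divr_ge0; last lra.
  apply: mulr_ge0; [lra | exact: sqrtr_ge0].
have h3 : X + 1 <= A * Num.sqrt la.
  have -> : X = 2 * Num.sqrt K2 / s * Num.sqrt la.
    by rewrite /X sqrtrM; [rewrite mulrA mulrAC | lra].
  rewrite /A mulrDl mul1r; lra.
have h4 : ((Num.trunc X).+1)%:R ^+ d.-1 <= (A * Num.sqrt la) ^+ d.-1 :> R.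
  apply: lerXn2r; rewrite ?nnegrE; [exact: ler0n | apply: mulr_ge0; rewrite /A; lra | lra].
have edr : d%:R = (d.-1)%:R + 1 :> R by rewrite natr1 prednK.
have epow : la `^ ((d%:R - 1) / 2) = Num.sqrt la ^+ d.-1.
  rewrite edr.
  have -> : ((d.-1)%:R + 1 - 1) / 2 = 2^-1 * (d.-1)%:R :> R by ring.
  rewrite powRrM powR12_sqrt; last lra.
  by rewrite powR_mulrn // sqrtr_ge0.
rewrite epow -exprMn.
exact: le_trans h1 h4.
Qed.



Lemma ln_mono {R : realType} (x y : R) : 0 < x -> x <= y -> ln x <= ln y.
Proof.
move=> hx hxy; rewrite ler_ln // posrE //; lra.
Qed.

Theorem theorem10p2 (R : realType) (d : nat) (c0 c c1 : R) :
  (2 <= d)%N -> 0 < c0 -> 0 < c -> 0 < c1 ->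
  exists (C : R) (N : nat), forall n : nat, (N <= n)%N ->
    forall (m : nat) (y : 'I_m -> 'rV[R]_d),
      maximal_separated_system (rho c n) c1 y ->
      forall i : 'I_m,
        (degree (Rad c0 n) (rin c c1 n) y i)%:R
          <= C * (ln (ln (n%:R))) `^ ((d%:R - 1) / 2).
Proof.
move=> hd hc0 hc hc1.
have hd1 : (1 <= d)%N by apply: leq_trans hd.
set dr : R := d%:R.
have hdr : 1 <= dr by rewrite /dr ler1n.
set g := `|ln c|.
have hg : 0 <= g by exact: normr_ge0.
have hlc : - g <= ln c <= g by rewrite -ler_norml.
move: hlc => /andP[hlc1 hlc2].
set K := c0 + 3 + 2 * g + 10 * c1 ^+ 2.
set K2 := 48 * K + 64 * c1 ^+ 2.
have hK : 0 < K by have := sqr_ge0 c1; rewrite /K; lra.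
have hK2 : 64 * c1 ^+ 2 < K2 by rewrite /K2; lra.
set E := 4 * dr * K2 + 3.
have hE : 0 <= E by rewrite /E; nra.
set T0 := expR (2 * g + 1) + (E + g + 1) ^+ 2.
set s := c1 / (2 * dr ^+ 2).
have hs : 0 < s by rewrite /s divr_gt0 // mulr_gt0 // exprn_gt0 //; lra.
set A := 2 * Num.sqrt K2 / s + 1.
have hA : 1 <= A.
  have h0 : 0 <= 2 * Num.sqrt K2 / s.
    apply: divr_ge0; last lra.
    apply: mulr_ge0; [lra | exact: sqrtr_ge0].
  rewrite /A; lra.
exists (A ^+ d.-1), (Num.trunc (expR T0)).+1.
move=> n hn m y hM i.
have hnT : expR T0 < n%:R.
  apply: lt_le_trans (truncnS_gt _) _; by rewrite ler_nat.
have hn0 : 0 < n%:R :> R by apply: lt_trans hnT; exact: expR_gt0.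
set l := ln (n%:R : R).
have hlT : T0 <= l by rewrite -(expRK T0); apply: ln_mono => //; [exact: expR_gt0 | lra].
have hT0a : expR (2 * g + 1) <= T0 by rewrite /T0; have := sqr_ge0 (E + g + 1); lra.
have hT0b : (E + g + 1) ^+ 2 <= T0 by rewrite /T0; have := expR_gt0 (2 * g + 1); lra.
have hl0 : 0 < l by apply: lt_le_trans (expR_gt0 (2 * g + 1)) _; lra.
set la := ln l.
have hla : 2 * g + 1 <= la.
  rewrite -(expRK (2 * g + 1)); apply: ln_mono => //; [exact: expR_gt0 | lra].
have hla1 : 1 <= la by lra.
set u := Num.sqrt l.
have hu2 : u ^+ 2 = l by rewrite sqr_sqrtr //; lra.
have hu0 : 0 < u by rewrite sqrtr_gt0.
have hlau : la < 2 * u.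
  have -> : la = ln u *+ 2 by rewrite -lnXn // hu2.
  have := ln_sublinear hu0; rewrite mulr2n; lra.
have hu : E + g + 1 <= u.
  rewrite -(ger0_norm (_ : 0 <= E + g + 1)); last by lra.
  by rewrite -sqrtr_sqr ler_sqrt; lra.
have hlla0 : 0 <= ln la by apply: ln_ge0.
have hlla1 : ln la < la by apply: ln_sublinear; lra.
set Rsq := 2 * l + c0 * la.
set Psq := 2 * l - la - 2 * (ln c + ln la).
have eRad : Rad c0 n = Num.sqrt Rsq by rewrite /Rad ln_powR.
have eRho : rho c n = Num.sqrt Psq.
  rewrite /rho -/l -/la lnV ?posrE; last by apply: exprn_gt0; apply: mulr_gt0; lra.
  rewrite lnXn; last by apply: mulr_gt0; lra.
  rewrite lnM ?posrE; [|lra|lra].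
  by rewrite /Psq mulr2n; congr Num.sqrt; ring.
have hmain : E * la + 2 * g <= 2 * l.
  have h1 : E * la <= E * (2 * u) by apply: ler_wpM2l => //; lra.
  have h2 : (E + g + 1) * u <= u * u by apply: ler_wpM2r; lra.
  rewrite -hu2; nra.
have hPsq : 4 * dr * (K2 * la) <= Psq.
  have e : E * la = 4 * dr * (K2 * la) + 3 * la by rewrite /E; ring.
  rewrite /Psq; lra.
have hc1sq : 0 < c1 ^+ 2 by exact: exprn_gt0.
have hK2la : 0 < K2 * la by apply: mulr_gt0; lra.
have hdrK : 0 < 4 * dr * (K2 * la) by apply: mulr_gt0 => //; lra.
have hPsq0 : 0 <= Psq by lra.
set rh := rho c n.
have hrh2 : rh ^+ 2 = Psq by rewrite /rh eRho sqr_sqrtr.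
have hrh0 : 0 <= rh by rewrite /rh eRho sqrtr_ge0.
have hrhpos : 0 < rh by rewrite /rh eRho sqrtr_gt0; lra.
have hPsqc : 5 * c1 ^+ 2 < Psq.
  have : 4 * dr * (64 * c1 ^+ 2 * 1) <= 4 * dr * (K2 * la).
    apply: ler_wpM2l; first lra.
    apply: ler_pM; [nra|lra|lra|lra].
  have := sqr_ge0 c1; have : 0 < c1 ^+ 2 by nra. nra.
set Ro := Rad c0 n.
have hRsq0 : 0 <= Rsq by rewrite /Rsq; nra.
have hRo2 : Ro ^+ 2 = Rsq by rewrite /Ro eRad sqr_sqrtr.
have hrhRo : rh <= Ro.
  rewrite /rh /Ro eRho eRad ler_sqrt //.
  rewrite /Psq /Rsq; nra.
set ri := rin c c1 n.
have eri : ri = rh - 5 * c1 ^+ 2 / rh by [].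
have hri0 : 0 < ri.
  have -> : ri = (rh ^+ 2 - 5 * c1 ^+ 2) / rh by rewrite eri; field; lra.
  by apply: divr_gt0 => //; lra.
have hrirh : ri <= rh.
  have : 0 <= 5 * c1 ^+ 2 / rh by apply: divr_ge0 => //; nra.
  lra.
have hri2 : rh ^+ 2 - 10 * c1 ^+ 2 <= ri ^+ 2.
  have -> : ri ^+ 2 = rh ^+ 2 - 10 * c1 ^+ 2 + (5 * c1 ^+ 2 / rh) ^+ 2.
    by rewrite eri; field; lra.
  have := sqr_ge0 (5 * c1 ^+ 2 / rh); lra.
have hDelta : 48 * (Ro ^+ 2 - ri ^+ 2) + 64 * c1 ^+ 2 <= K2 * la.
  have h1 : Ro ^+ 2 - ri ^+ 2 <= K * la.
    rewrite hRo2; rewrite hrh2 in hri2.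
    have h2 : 2 * g <= 2 * g * la by nra.
    have h3 : 10 * c1 ^+ 2 <= 10 * c1 ^+ 2 * la by have := sqr_ge0 c1; nra.
    rewrite /K /Rsq /Psq in hri2 *; nra.
  have h4 : 64 * c1 ^+ 2 <= 64 * c1 ^+ 2 * la by have := sqr_ge0 c1; nra.
  rewrite /K2; nra.
have hcount := @count_bound R d Ro ri rh c1 (K2 * la) m y i hd1 hc1 hri0 hrirh hrhRo
  hDelta (ltac:(rewrite hrh2; exact: hPsq)) hM.
exact: final_bound hd1 hs hla1 (ltW (le_lt_trans (ltW (mulr_gt0 (ltac:(lra) : (0:R) < 64) hc1sq)) hK2)) hcount.
Qed.
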